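(* Let $\gamma\in(0,\pi)$, $\Delta>0$, $\Sigma_0,\Theta_0\in\mathbb{R}$, and define $$u_s(x,t)=-\frac{2i\,e^{i\Sigma+\Theta+2i\gamma}\sin\gamma}{\Delta\left(e^{2\Theta+i\gamma}+1\right)},\quad \Sigma=\frac{(t-4\Delta^4x)\cos\gamma}{2\Delta^2}+\Sigma_0,\quad \Theta=\frac{(t+4\Delta^4x)\sin\gamma}{2\Delta^2}+\Theta_0.$$ Set $c_s=-\frac{1}{4\Delta^4}$, $k_s=0$, $\Omega_s=-\frac{\cos\gamma}{\Delta^2}$, $$\varphi_s(y)=\sqrt{\frac{2\sin^2\gamma}{\Delta^2\left(\cos\gamma+\cosh\left(4\Delta^2y\sin\gamma+2\Theta_0\right)\right)}}.$$ Then: (i) $|u_s(x,t)|=\varphi_s(x-c_st)$; (ii) there is a constant $\theta_{0s}\in\mathbb{R}$ such that, with $$\theta_s(y)=-\arctan\!\left(\tan\tfrac{\gamma}{2}\,\tanh\left(2\Delta^2y\sin\gamma+\Theta_0\right)\right)-\cot\gamma\,\left(2\Delta^2y\sin\gamma+\Theta_0\right)+\theta_{0s},$$ one has $u_s(x,t)=\varphi_s(x-c_st)\,e^{i\left(k_sx-\Omega_st+\theta_s(x-c_st)\right)}$ for all $x,t$; (iii) $\varphi=\varphi_s$ satisfies $\varphi_y^2=-\frac{1}{16c^2}V(\varphi)$ with $c=c_s$, $k=k_s$, $\Omega=\Omega_s$ and $A=B=0$, and $\theta_s$ satisfies $\theta_y=\frac{\varphi^4-2ck\varphi^2-2\Omega\varphi^2+4A}{4c\varphi^2}$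 with the same parameters.
   Context: Here $V(\varphi)=\varphi^{-2}\left(\varphi^8+c_3\varphi^6+c_2\varphi^4+c_1\varphi^2+c_0\right)$ with $c_3=4ck-4\Omega$, $c_2=4(c^2k^2+\Omega^2+2A+c(4-2k\Omega))$, $c_1=-32Bc$, $c_0=16A^2$. The function $u_s$ is the one-soliton solution of $u_{tx}=u-i|u|^2u_x$. *)

(* Defs.v *)
(* classical reals; complex numbers encoded as pairs (Re, Im). *)
From Stdlib Require Import Reals.
Open Scope R_scope.

Definition C : Type := (R * R)%type.
Definition RtoC (a : R) : C := (a, 0).
Definition Ci : C := (0, 1).
Definition Cadd (z w : C) : C := (fst z + fst w, snd z + snd w).
Definition Cmul (z w : C) : C :=
  (fst z * fst w - snd z * snd w, fst z * snd w + snd z * fst w).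
Definition Cinv (z : C) : C :=
  (fst z / (fst z ^ 2 + snd z ^ 2), - snd z / (fst z ^ 2 + snd z ^ 2)).
Definition Cdiv (z w : C) : C := Cmul z (Cinv w).
Definition Cexp (z : C) : C := (exp (fst z) * cos (snd z), exp (fst z) * sin (snd z)).
Definition Cmod (z : C) : R := sqrt (fst z ^ 2 + snd z ^ 2).

Definition Sig (gam Del Sig0 x t : R) : R :=
  (t - 4 * Del ^ 4 * x) * cos gam / (2 * Del ^ 2) + Sig0.
Definition Tht (gam Del Th0 x t : R) : R :=
  (t + 4 * Del ^ 4 * x) * sin gam / (2 * Del ^ 2) + Th0.

Definition u_s (gam Del Sig0 Th0 x t : R) : C :=
  Cdiv
    (Cmul (Cmul (RtoC (-2)) Ci)
          (Cmul (Cexp (Tht gam Del Th0 x t, Sig gam Del Sig0 x t + 2 * gam))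
                (RtoC (sin gam))))
    (Cmul (RtoC Del) (Cadd (Cexp (2 * Tht gam Del Th0 x t, gam)) (RtoC 1))).

Definition c_s (Del : R) : R := - (1 / (4 * Del ^ 4)).
Definition k_s : R := 0.
Definition Omega_s (gam Del : R) : R := - (cos gam / Del ^ 2).

Definition phi_s (gam Del Th0 y : R) : R :=
  sqrt (2 * (sin gam) ^ 2 /
        (Del ^ 2 * (cos gam + cosh (4 * Del ^ 2 * y * sin gam + 2 * Th0)))).

Definition theta_s (gam Del Th0 th0s y : R) : R :=
  - atan (tan (gam / 2) * tanh (2 * Del ^ 2 * y * sin gam + Th0))
  - (cos gam / sin gam) * (2 * Del ^ 2 * y * sin gam + Th0) + th0s.

Definition Vpot (c k Om A B p : R) : R :=
  let c3 := 4 * c * k - 4 * Om in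
  let c2 := 4 * (c ^ 2 * k ^ 2 + Om ^ 2 + 2 * A + c * (4 - 2 * k * Om)) in
  let c1 := - 32 * B * c in
  let c0 := 16 * A ^ 2 in
  / (p ^ 2) * (p ^ 8 + c3 * p ^ 6 + c2 * p ^ 4 + c1 * p ^ 2 + c0).

(* Main.v *)
Require Import Defs.
From Stdlib Require Import Reals Lra Lia Psatz.
Open Scope R_scope.

Lemma Cdiv_norm2 (a b p q : R) : p^2+q^2 <> 0 ->
  fst (Cdiv (a,b) (p,q)) ^2 + snd (Cdiv (a,b) (p,q)) ^2 = (a^2+b^2)/(p^2+q^2).
Proof. intros H. unfold Cdiv, Cmul, Cinv; simpl. field. intro; apply H; nra. Qed.

Lemma Cdiv_eq (a b p q v1 v2 : R): p^2+q^2<>0 -> a = v1*p - v2*q -> b = v1*q + v2*p ->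
  Cdiv (a,b) (p,q) = (v1,v2).
Proof. intros H H1 H2. subst. unfold Cdiv, Cmul, Cinv; simpl. f_equal; field; intro; apply H; nra. Qed.

Lemma u_s_eq gam Del Sig0 Th0 x t :
  u_s gam Del Sig0 Th0 x t =
  Cdiv (2*exp (Tht gam Del Th0 x t)*sin gam*sin (Sig gam Del Sig0 x t + 2*gam),
        -2*exp (Tht gam Del Th0 x t)*sin gam*cos (Sig gam Del Sig0 x t + 2*gam))
       (Del*(exp (2*Tht gam Del Th0 x t)*cos gam+1), Del*(exp (2*Tht gam Del Th0 x t)*sin gam)).
Proof. unfold u_s, Cmul, Cadd, Cexp, RtoC, Ci; simpl. f_equal; f_equal; ring. Qed.

Lemma XDcst a x : derivable_pt_lim (fun _ => a) x 0.
Proof. apply (derivable_pt_lim_const a x). Qed.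
Lemma XDid x : derivable_pt_lim (fun y => y) x 1.
Proof. apply derivable_pt_lim_id. Qed.
Lemma XDplus f g x l1 l2 : derivable_pt_lim f x l1 -> derivable_pt_lim g x l2 ->
  derivable_pt_lim (fun y => f y + g y) x (l1 + l2).
Proof. apply derivable_pt_lim_plus. Qed.
Lemma XDminus f g x l1 l2 : derivable_pt_lim f x l1 -> derivable_pt_lim g x l2 ->
  derivable_pt_lim (fun y => f y - g y) x (l1 - l2).
Proof. apply derivable_pt_lim_minus. Qed.
Lemma XDmult f g x l1 l2 : derivable_pt_lim f x l1 -> derivable_pt_lim g x l2 ->
  derivable_pt_lim (fun y => f y * g y) x (l1 * g x + f x * l2).
Proof. apply derivable_pt_lim_mult. Qed.
Lemma XDopp f x l : derivable_pt_lim f x l -> derivable_pt_lim (fun y => - f y) x (- l).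
Proof. apply derivable_pt_lim_opp. Qed.
Lemma XDdiv f g x l1 l2 : derivable_pt_lim f x l1 -> derivable_pt_lim g x l2 -> g x <> 0 ->
  derivable_pt_lim (fun y => f y / g y) x ((l1 * g x - l2 * f x) / Rsqr (g x)).
Proof. apply derivable_pt_lim_div. Qed.
Lemma XDcomp f g x l1 l2 : derivable_pt_lim g x l2 -> derivable_pt_lim f (g x) l1 ->
  derivable_pt_lim (fun y => f (g y)) x (l1 * l2).
Proof. intros; apply (derivable_pt_lim_comp g f); auto. Qed.
Lemma half_facts gam : 0 < gam < PI ->
  let T := tan (gam/2) in
  0 < T /\ 0 < cos (gam/2) /\ sin (gam/2) = T * cos (gam/2) /\
  cos (gam/2) ^ 2 = 1/(1+T^2) /\
  cos gam = (1-T^2)/(1+T^2) /\ sin gam = 2*T/(1+T^2).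
Proof.
  intros Hg T.
  assert (Hch : 0 < cos (gam/2)) by (apply cos_gt_0; lra).
  assert (Hsh : 0 < sin (gam/2)) by (apply sin_gt_0; lra).
  assert (HT : T = sin (gam/2) / cos (gam/2)) by reflexivity.
  assert (H1 := sin2_cos2 (gam/2)). unfold Rsqr in H1.
  assert (Hg2 : gam = 2 * (gam/2)) by field.
  assert (Hc : cos gam = cos (gam/2) * cos (gam/2) - sin (gam/2) * sin (gam/2))
    by (rewrite Hg2 at 1; apply cos_2a).
  assert (Hs : sin gam = 2 * sin (gam/2) * cos (gam/2))
    by (rewrite Hg2 at 1; apply sin_2a).
  set (ch := cos (gam/2)) in *. set (sh := sin (gam/2)) in *.
  assert (HT2 : 1 + T^2 = 1/ch^2).
  { rewrite HT. field_simplify; try lra. rewrite <- H1. field. lra. }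
  repeat split.
  - rewrite HT; apply Rdiv_lt_0_compat; lra.
  - exact Hch.
  - rewrite HT; field; lra.
  - rewrite HT2; field; lra.
  - rewrite HT2, Hc, HT; field; lra.
  - rewrite HT2, Hs, HT; field; lra.
Qed.

Lemma u_s_eq2 gam Del Sig0 Th0 x t :
  let k := 2*exp (Tht gam Del Th0 x t)*sin gam in
  let al := Sig gam Del Sig0 x t + 2*gam in
  u_s gam Del Sig0 Th0 x t =
  Cdiv (k*sin al, -(k*cos al))
       (Del*(exp (2*Tht gam Del Th0 x t)*cos gam+1), Del*(exp (2*Tht gam Del Th0 x t)*sin gam)).
Proof. intros. unfold u_s, Cmul, Cadd, Cexp, RtoC, Ci, k, al; simpl. f_equal; f_equal; ring. Qed.

Lemma sqsum k a : (k*sin a)^2 + (-(k*cos a))^2 = k^2.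
Proof. pose proof (sin2_cos2 a) as H. unfold Rsqr in H. nra. Qed.

Lemma part_i gam Del Sig0 Th0 x t : 0 < gam < PI -> 0 < Del ->
  Cmod (u_s gam Del Sig0 Th0 x t) = phi_s gam Del Th0 (x - c_s Del * t).
Proof.
  intros Hg HD.
  destruct (half_facts gam Hg) as (HT & Hch & Hsh & Hch2 & Hc & Hs).
  set (T := tan (gam/2)) in *.
  assert (Hsg : 0 < sin gam) by (apply sin_gt_0; lra).
  unfold Cmod. rewrite u_s_eq2. cbv zeta.
  assert (HE2 : 0 < exp (2 * Tht gam Del Th0 x t)) by apply exp_pos.
  rewrite Cdiv_norm2.
  2:{ assert (0 < (Del * (exp (2 * Tht gam Del Th0 x t) * sin gam))^2).
      { apply pow_lt. apply Rmult_lt_0_compat; auto. apply Rmult_lt_0_compat; auto. }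
      pose proof (pow2_ge_0 (Del * (exp (2 * Tht gam Del Th0 x t) * cos gam + 1))). lra. }
  rewrite sqsum. unfold phi_s. f_equal.
  set (Th := Tht gam Del Th0 x t).
  replace (4*Del^2*(x - c_s Del*t)*sin gam + 2*Th0) with (2*Th)
    by (unfold Th, Tht, c_s; field; lra).
  unfold cosh. rewrite exp_Ropp.
  replace (exp (2*Th)) with (exp Th * exp Th) by (rewrite <- exp_plus; f_equal; ring).
  assert (HE : 0 < exp Th) by apply exp_pos.
  set (E := exp Th) in *.
  rewrite Hc, Hs.
  assert (HT2 : 0 < T^2) by (apply pow_lt; lra).
  field. repeat split; try lra.
  - replace ((1 - T ^ 2) * (E * E * 2) + (E * E * (E * E) + 1) * (1 + T ^ 2))
      with ((E*E+1)^2 + T^2*(E*E-1)^2) by ring.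
    pose proof (pow2_ge_0 (E*E-1)). assert (0 < (E*E+1)^2) by (apply pow_lt; nra). nra.
  - assert (0 < (Del * (E * E * (2 * T))) ^ 2) by (apply pow_lt; assert (0 < E*E) by nra; assert (0 < E*E*(2*T)) by nra; nra).
    pose proof (pow2_ge_0 (Del * (E * E * (1 - T ^ 2) + (1 + T ^ 2)))). lra.
Qed.

Lemma K2gen T E ch R x th C S c s :
  0 < T -> 0 < E -> 0 < R ->
  c = (1-T^2)/(1+T^2) -> s = 2*T/(1+T^2) ->
  th = ((E - /E)/2)/((E + /E)/2) -> x = T*th ->
  C = ch*(1/R) - T*ch*(x/R) -> S = T*ch*(1/R) + ch*(x/R) ->
  C*(E*E*s) - S*(E*E*c+1) = 0.
Proof.
  intros HT HE HR Hc Hs Hth Hx HC HS. subst.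
  field. repeat split; nra.
Qed.

Lemma Xpos T E ch R x th c s :
  0 < T -> 0 < E -> 0 < R -> 0 < ch ->
  c = (1-T^2)/(1+T^2) -> s = 2*T/(1+T^2) ->
  th = ((E - /E)/2)/((E + /E)/2) -> x = T*th ->
  0 <= (1 - T*x)*(E*E*c+1) + (T + x)*(E*E*s).
Proof.
  intros HT HE HR Hch Hc Hs Hth Hx. subst.
  assert (0 < E*E) by nra.
  replace ((1 - T * (T * (((E - / E) / 2) / ((E + / E) / 2)))) *
   (E * E * ((1 - T ^ 2) / (1 + T ^ 2)) + 1) +
   (T + T * (((E - / E) / 2) / ((E + / E) / 2))) * (E * E * (2 * T / (1 + T ^ 2))))
  with ((((E*E+1) - T^2*(E*E-1))^2 + 4*T^2*(E*E)^2)/((1+T^2)*(E*E+1))).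
  - apply Rmult_le_pos.
    + pose proof (pow2_ge_0 ((E*E+1) - T^2*(E*E-1))). pose proof (pow2_ge_0 (E*E)). pose proof (pow2_ge_0 T). nra.
    + left; apply Rinv_0_lt_compat. nra.
  - field. repeat split; nra.
Qed.

Lemma NZ T u : 0 < u -> (1 - T^2)*(u*2) + (u*u+1)*(1+T^2) > 0.
Proof.
  intros Hu. replace ((1 - T^2)*(u*2) + (u*u+1)*(1+T^2)) with ((u+1)^2 + T^2*(u-1)^2) by ring.
  pose proof (pow2_ge_0 (u-1)). pose proof (pow2_ge_0 T). assert (0 < (u+1)^2) by (apply pow_lt; lra). nra.
Qed.

Lemma K1gen T E ch R x th C S c s Del p :
  0 < T -> 0 < E -> 0 < R -> 0 < ch -> 0 < Del -> 0 <= p ->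
  c = (1-T^2)/(1+T^2) -> s = 2*T/(1+T^2) ->
  th = ((E - /E)/2)/((E + /E)/2) -> x = T*th ->
  C = ch*(1/R) - T*ch*(x/R) -> S = T*ch*(1/R) + ch*(x/R) ->
  p^2 = 2*s^2/(Del^2*(c + (E*E + /(E*E))/2)) ->
  ch^2 = 1/(1+T^2) -> R^2 = 1 + x*x ->
  p*Del*(C*(E*E*c+1) + S*(E*E*s)) = 2*E*s.
Proof.
  intros HT HE HR Hch HD Hp Hc Hs Hth Hx HC HS Hp2 Hch2 HR2.
  assert (HX := Xpos T E ch R x th c s HT HE HR Hch Hc Hs Hth Hx).
  assert (HCS : C*(E*E*c+1) + S*(E*E*s) = ch/R * ((1 - T*x)*(E*E*c+1) + (T + x)*(E*E*s)))
    by (subst C S; field; lra).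
  rewrite HCS.
  set (Y := (1 - T*x)*(E*E*c+1) + (T + x)*(E*E*s)) in *.
  apply Rsqr_inj.
  - apply Rmult_le_pos. apply Rmult_le_pos; lra.
    apply Rmult_le_pos; [|exact HX]. apply Rmult_le_pos; [lra|]. left; apply Rinv_0_lt_compat; lra.
  - assert (0 < s) by (rewrite Hs; apply Rdiv_lt_0_compat; nra). nra.
  - unfold Rsqr.
    replace (p * Del * (ch / R * Y) * (p * Del * (ch / R * Y))) with (p^2 * ch^2 / R^2 * Del^2 * Y^2)
      by (field; lra).
    rewrite Hp2, Hch2, HR2. unfold Y. subst x th c s.
    field. repeat split; try nra. apply Rgt_not_eq, NZ; nra.
Qed.

Lemma E1gen sa ca C S p Del A B k :
  p*Del*(C*A + S*B) = k -> C*B - S*A = 0 ->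
  k*sa = (p*(sa*C - ca*S))*(Del*A) - (p*-(ca*C + sa*S))*(Del*B).
Proof.
  intros H1 H2. rewrite <- H1. apply Rminus_diag_uniq.
  match goal with |- ?L - ?R = 0 => replace (L - R) with (- (p*Del*ca) * (C*B - S*A)) by ring end.
  rewrite H2; ring.
Qed.

Lemma E2gen sa ca C S p Del A B k :
  p*Del*(C*A + S*B) = k -> C*B - S*A = 0 ->
  -(k*ca) = (p*(sa*C - ca*S))*(Del*B) + (p*-(ca*C + sa*S))*(Del*A).
Proof.
  intros H1 H2. rewrite <- H1. apply Rminus_diag_uniq.
  match goal with |- ?L - ?R = 0 => replace (L - R) with (- (p*Del*sa) * (C*B - S*A)) by ring end.
  rewrite H2; ring.
Qed.

Lemma cosh_ge1 w : 1 <= cosh w.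
Proof.
  unfold cosh. rewrite exp_Ropp. assert (He := exp_pos w). set (e := exp w) in *.
  replace ((e + /e)/2) with (1 + (e-1)^2 * /e / 2) by (field; lra).
  assert (0 < /e) by (apply Rinv_0_lt_compat; lra). pose proof (pow2_ge_0 (e-1)).
  assert (0 <= (e-1)^2 * /e) by (apply Rmult_le_pos; lra). lra.
Qed.

Lemma Dpos gam w : 0 < gam < PI -> 0 < cos gam + cosh w.
Proof.
  intros Hg. destruct (half_facts gam Hg) as (HT & _ & _ & _ & Hc & _).
  assert (cos gam + 1 > 0) by (rewrite Hc; apply Rlt_gt; apply Rminus_lt_0 ||
    (replace ((1 - tan (gam/2) ^ 2) / (1 + tan (gam/2) ^ 2) + 1) with (2 / (1 + tan (gam/2)^2)) by (field; nra);
     apply Rdiv_lt_0_compat; nra)).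
  pose proof (cosh_ge1 w). lra.
Qed.

Lemma cos_mpi2 b : cos (b - PI/2) = sin b.
Proof. rewrite cos_minus, cos_PI2, sin_PI2; ring. Qed.
Lemma sin_mpi2 b : sin (b - PI/2) = - cos b.
Proof. rewrite sin_minus, cos_PI2, sin_PI2; ring. Qed.

Lemma part_ii gam Del Sig0 Th0 x t : 0 < gam < PI -> 0 < Del ->
  u_s gam Del Sig0 Th0 x t =
  Cmul (RtoC (phi_s gam Del Th0 (x - c_s Del * t)))
       (Cexp (0, k_s * x - Omega_s gam Del * t
                 + theta_s gam Del Th0 (Sig0 + 3*gam/2 - PI/2 + cos gam / sin gam * Th0) (x - c_s Del * t))).
Proof.
  intros Hg HD.
  destruct (half_facts gam Hg) as (HT & Hch & Hsh & Hch2 & Hc & Hs).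
  set (T := tan (gam/2)) in *.
  assert (Hsg : 0 < sin gam) by (apply sin_gt_0; lra).
  rewrite u_s_eq2. cbv zeta.
  set (Th := Tht gam Del Th0 x t). set (al := Sig gam Del Sig0 x t + 2*gam).
  assert (Harg : 2*Del^2*(x - c_s Del*t)*sin gam + Th0 = Th) by (unfold Th, Tht, c_s; field; lra).
  assert (Hph : k_s * x - Omega_s gam Del * t
                 + theta_s gam Del Th0 (Sig0 + 3*gam/2 - PI/2 + cos gam / sin gam * Th0) (x - c_s Del * t)
                = (al - (gam/2 + atan (T * tanh Th))) - PI/2).
  { unfold theta_s. rewrite Harg. fold T. unfold al, Th, k_s, Omega_s, Sig, Tht. field. lra. }
  rewrite Hph. clear Hph.
  set (p := phi_s gam Del Th0 (x - c_s Del * t)).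
  replace (Cmul (RtoC p) (Cexp (0, al - (gam / 2 + atan (T * tanh Th)) - PI / 2)))
    with (p * cos (al - (gam / 2 + atan (T * tanh Th)) - PI / 2),
          p * sin (al - (gam / 2 + atan (T * tanh Th)) - PI / 2))
    by (unfold Cmul, RtoC, Cexp; simpl; rewrite exp_0; f_equal; ring).
  rewrite cos_mpi2, sin_mpi2, sin_minus, cos_minus.
  replace (exp (2*Th)) with (exp Th * exp Th) by (rewrite <- exp_plus; f_equal; ring).
  assert (HE : 0 < exp Th) by apply exp_pos.
  set (E := exp Th) in *.
  set (a := atan (T * tanh Th)).
  set (C := cos (gam/2 + a)). set (S := sin (gam/2 + a)).
  set (R := sqrt (1 + Rsqr (T * tanh Th))).
  assert (HR : 0 < R) by (apply sqrt_lt_R0; pose proof (Rle_0_sqr (T*tanh Th)); lra).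
  assert (Hth : tanh Th = ((E - /E)/2)/((E + /E)/2))
    by (unfold tanh, sinh, cosh, E; rewrite exp_Ropp; reflexivity).
  assert (HC : C = cos (gam/2)*(1/R) - T*cos (gam/2)*((T*tanh Th)/R))
    by (unfold C, a, R; rewrite cos_plus, cos_atan, sin_atan, Hsh; ring).
  assert (HS : S = T*cos (gam/2)*(1/R) + cos (gam/2)*((T*tanh Th)/R))
    by (unfold S, a, R; rewrite sin_plus, cos_atan, sin_atan, Hsh; ring).
  assert (K2 := K2gen T E (cos (gam/2)) R (T*tanh Th) (tanh Th) C S (cos gam) (sin gam)
                  HT HE HR Hc Hs Hth eq_refl HC HS).
  assert (Hp2 : p^2 = 2*(sin gam)^2/(Del^2*(cos gam + (E*E + /(E*E))/2))).
  { unfold p, phi_s. rewrite pow2_sqrt.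
    - replace (4 * Del ^ 2 * (x - c_s Del * t) * sin gam + 2 * Th0) with (2*Th)
        by (unfold Th, Tht, c_s; field; lra).
      unfold cosh. rewrite exp_Ropp.
      replace (exp (2*Th)) with (exp Th * exp Th) by (rewrite <- exp_plus; f_equal; ring).
      reflexivity.
    - apply Rmult_le_pos. nra. left. apply Rinv_0_lt_compat. apply Rmult_lt_0_compat. nra.
      apply Dpos; exact Hg. }
  assert (HR2 : R^2 = 1 + (T*tanh Th)*(T*tanh Th)) by (unfold R; rewrite pow2_sqrt; [unfold Rsqr; ring | pose proof (Rle_0_sqr (T*tanh Th)); lra]).
  assert (Hp : 0 <= p) by (unfold p, phi_s; apply sqrt_pos).
  assert (K1 := K1gen T E (cos (gam/2)) R (T*tanh Th) (tanh Th) C S (cos gam) (sin gam) Del p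
                  HT HE HR Hch HD Hp Hc Hs Hth eq_refl HC HS Hp2 Hch2 HR2).
  apply Cdiv_eq.
  - assert (0 < (Del * (E * E * sin gam))^2) by (apply pow_lt; assert (0 < E*E) by nra; assert (0 < E*E*sin gam) by nra; nra).
    pose proof (pow2_ge_0 (Del * (E * E * cos gam + 1))). lra.
  - apply E1gen; assumption.
  - apply E2gen; assumption.
Qed.

Lemma Vpot_v c k Om A B q v : q^2 = v -> v <> 0 ->
  Vpot c k Om A B q = /v * (v^4 + (4*c*k - 4*Om)*v^3
     + (4 * (c ^ 2 * k ^ 2 + Om ^ 2 + 2 * A + c * (4 - 2 * k * Om)))*v^2 + (-32*B*c)*v + 16*A^2).
Proof.
  intros H Hv. unfold Vpot.
  replace (q^8) with ((q^2)^4) by ring. replace (q^6) with ((q^2)^3) by ring.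
  replace (q^4) with ((q^2)^2) by ring. rewrite H. reflexivity.
Qed.

Lemma part_phi gam Del Th0 y : 0 < gam < PI -> 0 < Del ->
  exists d, derivable_pt_lim (phi_s gam Del Th0) y d /\
   d^2 = -(1/(16*c_s Del^2)) * Vpot (c_s Del) k_s (Omega_s gam Del) 0 0 (phi_s gam Del Th0 y).
Proof.
  intros Hg HD.
  assert (Hsg : 0 < sin gam) by (apply sin_gt_0; lra).
  assert (HDp := Dpos gam (4 * Del ^ 2 * y * sin gam + 2 * Th0) Hg).
  set (v := 2 * sin gam ^ 2 / (Del ^ 2 * (cos gam + cosh (4 * Del ^ 2 * y * sin gam + 2 * Th0)))).
  assert (Hv : 0 < v) by (unfold v; apply Rdiv_lt_0_compat; [nra | apply Rmult_lt_0_compat; nra]).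
  eexists. split.
  - unfold phi_s. eapply (XDcomp sqrt).
    + eapply XDdiv. apply XDcst.
      eapply XDmult. apply XDcst. eapply XDplus. apply XDcst.
      eapply XDcomp. eapply XDplus. eapply XDmult. eapply XDmult. apply XDcst. apply XDid. apply XDcst. apply XDcst.
      apply derivable_pt_lim_cosh.
      apply Rgt_not_eq, Rmult_lt_0_compat; [nra | exact HDp].
    + apply derivable_pt_lim_sqrt. exact Hv.
  - cbv beta. fold v.
    assert (Hq : phi_s gam Del Th0 y ^ 2 = v) by (unfold phi_s; fold v; apply pow2_sqrt; lra).
    rewrite (Vpot_v _ _ _ _ _ _ v Hq) by lra.
    replace (/ (2 * sqrt v)) with (/ (2 * phi_s gam Del Th0 y)) by reflexivity.
    set (L := (_ / _)%R).
    replace ((/ (2 * phi_s gam Del Th0 y) * L)^2) with (L^2 / (4 * phi_s gam Del Th0 y ^2)).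
    2:{ field. unfold phi_s; fold v. apply Rgt_not_eq, sqrt_lt_R0; lra. }
    rewrite Hq. unfold L, v, Rsqr, c_s, k_s, Omega_s.
    destruct (half_facts gam Hg) as (HT & Hch & Hsh & Hch2 & Hc & Hs).
    set (T := tan (gam/2)) in *.
    unfold cosh, sinh in *. rewrite exp_Ropp in *.
    set (G := exp (4 * Del ^ 2 * y * sin gam + 2 * Th0)) in *.
    assert (HG : 0 < G) by apply exp_pos.
    rewrite Hc, Hs in *.
    field. repeat split; try nra. apply Rgt_not_eq, NZ; lra.
Qed.

Lemma Dtanh z : derivable_pt_lim tanh z ((cosh z * cosh z - sinh z * sinh z)/Rsqr (cosh z)).
Proof.
  change tanh with (fun x => sinh x / cosh x).
  apply (XDdiv sinh cosh). apply derivable_pt_lim_sinh. apply derivable_pt_lim_cosh.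
  pose proof (cosh_ge1 z). lra.
Qed.

Lemma part_theta gam Del Th0 th0s y : 0 < gam < PI -> 0 < Del ->
  exists d, derivable_pt_lim (theta_s gam Del Th0 th0s) y d /\
   let p := phi_s gam Del Th0 y in
   d = (p ^ 4 - 2 * c_s Del * k_s * p ^ 2 - 2 * Omega_s gam Del * p ^ 2 + 4 * 0) / (4 * c_s Del * p ^ 2).
Proof.
  intros Hg HD.
  assert (Hsg : 0 < sin gam) by (apply sin_gt_0; lra).
  assert (HDp := Dpos gam (4 * Del ^ 2 * y * sin gam + 2 * Th0) Hg).
  set (v := 2 * sin gam ^ 2 / (Del ^ 2 * (cos gam + cosh (4 * Del ^ 2 * y * sin gam + 2 * Th0)))).
  assert (Hv : 0 < v) by (unfold v; apply Rdiv_lt_0_compat; [nra | apply Rmult_lt_0_compat; nra]).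
  eexists. split.
  - unfold theta_s. eapply XDplus. eapply XDminus. eapply XDopp. eapply (XDcomp atan).
    + eapply XDmult. apply XDcst. eapply (XDcomp tanh).
      * eapply XDplus. eapply XDmult. eapply XDmult. apply XDcst. apply XDid. apply XDcst. apply XDcst.
      * apply Dtanh.
    + apply derivable_pt_lim_atan.
    + eapply XDmult. apply XDcst.
      eapply XDplus. eapply XDmult. eapply XDmult. apply XDcst. apply XDid. apply XDcst. apply XDcst.
    + apply XDcst.
  - cbv beta zeta.
    assert (Hq : phi_s gam Del Th0 y ^ 2 = v) by (unfold phi_s; fold v; apply pow2_sqrt; lra).
    replace (phi_s gam Del Th0 y ^ 4) with ((phi_s gam Del Th0 y ^ 2)^2) by ring.
    rewrite Hq. unfold v, Rsqr, c_s, k_s, Omega_s.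
    replace (4 * Del ^ 2 * y * sin gam + 2 * Th0) with (2 * (2 * Del ^ 2 * y * sin gam + Th0)) by ring.
    destruct (half_facts gam Hg) as (HT & Hch & Hsh & Hch2 & Hc & Hs).
    set (T := tan (gam/2)) in *.
    unfold tanh, cosh, sinh in *. rewrite !exp_Ropp in *.
    replace (exp (2 * (2 * Del ^ 2 * y * sin gam + Th0))) with
      (exp (2 * Del ^ 2 * y * sin gam + Th0) * exp (2 * Del ^ 2 * y * sin gam + Th0))
      by (rewrite <- exp_plus; f_equal; ring).
    set (F := exp (2 * Del ^ 2 * y * sin gam + Th0)) in *.
    assert (HF : 0 < F) by apply exp_pos.
    rewrite Hc, Hs in *.
    field. repeat split; try nra. apply Rgt_not_eq, NZ; nra.
Qed.

Theorem mainTheorem7 (gam Del Sig0 Th0 : R)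
  (Hgam : 0 < gam < PI) (HDel : 0 < Del) :
  (* (i) *)
  (forall x t : R,
     Cmod (u_s gam Del Sig0 Th0 x t) = phi_s gam Del Th0 (x - c_s Del * t)) /\
  (exists th0s : R,
     (* (ii) *)
     (forall x t : R,
        u_s gam Del Sig0 Th0 x t =
        Cmul (RtoC (phi_s gam Del Th0 (x - c_s Del * t)))
             (Cexp (0, k_s * x - Omega_s gam Del * t
                       + theta_s gam Del Th0 th0s (x - c_s Del * t)))) /\
     (* (iii) *)
     (let c := c_s Del in let k := k_s in let Om := Omega_s gam Del in
      let A := 0 in let B := 0 in
      (forall y : R, exists d : R,
         derivable_pt_lim (phi_s gam Del Th0) y d /\
         d ^ 2 = - (1 / (16 * c ^ 2)) * Vpot c k Om A B (phi_s gam Del Th0 y)) /\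
      (forall y : R, exists d : R,
         derivable_pt_lim (theta_s gam Del Th0 th0s) y d /\
         let p := phi_s gam Del Th0 y in
         d = (p ^ 4 - 2 * c * k * p ^ 2 - 2 * Om * p ^ 2 + 4 * A) / (4 * c * p ^ 2)))).
Proof.
  split.
  - intros x t. apply part_i; assumption.
  - exists (Sig0 + 3*gam/2 - PI/2 + cos gam / sin gam * Th0). split.
    + intros x t. apply part_ii; assumption.
    + cbv zeta. split.
      * intros y. exact (part_phi gam Del Th0 y Hgam HDel).
      * intros y. exact (part_theta gam Del Th0 _ y Hgam HDel).
Qed.
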